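(* Let $(X,d)$ be a compact metric space, $\Lambda$ a finite nonempty set, and $\mathcal{F}=\{X; f_{\lambda}\mid\lambda\in\Lambda\}$ a parameterized iterated function system such that each $f_\lambda:X\to X$ is continuous and surjective. If $\mathcal{F}$ has the asymptotic average shadowing property, then every point of $X$ is a chain recurrent point of $\mathcal{F}$, i.e. $CR(\mathcal{F})=X$.
   Context: For $\sigma=\{\lambda_0,\lambda_1,\dots\}\in\Lambda^{\mathbb{Z}_+}$ write $\mathcal{F}_{\sigma_n}=f_{\lambda_{n-1}}\circ\cdots\circ f_{\lambda_0}$ ($\mathcal{F}_{\sigma_0}$ the identity). A sequence $\{x_i\}_{i\ge0}$ in $X$ is an asymptotic average pseudo-orbit of $\mathcal{F}$ if there is $\sigma=\{\lambda_0,\lambda_1,\dots\}\in\Lambda^{\mathbb{Z}_+}$ with $\lim_{n\to\infty}\frac1n\sum_{i=0}^{n-1}d(f_{\lambda_i}(x_i),x_{i+1})=0$; it is asymptotically shadowed in average by $z\in X$ if there is $\sigma\in\Lambda^{\mathbb{Z}_+}$ with $\lim_{n\to\infty}\frac1n\sum_{i=0}^{n-1}d(\mathcal{F}_{\sigma_i}(z),x_i)=0$. $\mathcal{F}$ has the asymptotic average shadowing property if every asymptotic average pseudo-orbit is asymptotically shadowed in average by some point of $X$. A point $x\in X$ is chain recurrent for $\mathcal{F}$ if for every $\epsilon>0$ there are points $x=p_0,p_1,\dots,p_n=x$ ($n\ge1$) and indices $\lambda_0,\dots,\lambda_{n-1}\in\Lambda$ with $d(f_{\lambda_i}(p_i),p_{i+1})\le\epsilon$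 for all $0\le i<n$. $CR(\mathcal{F})$ denotes the set of chain recurrent points of $\mathcal{F}$. *)

(* Defs.v *)
From HB Require Import structures.
From mathcomp Require Import all_boot all_order all_algebra.
From mathcomp Require Import all_classical all_reals all_analysis.
Set Implicit Arguments. Unset Strict Implicit. Unset Printing Implicit Defensive.
Import Order.TTheory GRing.Theory Num.Theory.
Import numFieldNormedType.Exports.
Local Open Scope classical_set_scope.
Local Open Scope ring_scope.

Section IFS.
Context {R : realType} {X : metricType R} {L : Type}.
Variable f : L -> X -> X.

Fixpoint Fsigma (sigma : nat -> L) (n : nat) (x : X) : X :=
  match n with
  | 0 => x
  | n'.+1 => f (sigma n') (Fsigma sigma n' x)
  end.

Definition cesaro (u : nat -> R) : nat -> R :=
  fun n => n%:R^-1 * \sum_(i < n) u i.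

Definition asymptotic_average_pseudo_orbit (xs : nat -> X) : Prop :=
  exists sigma : nat -> L,
    cesaro (fun i => mdist (f (sigma i) (xs i)) (xs i.+1)) @ \oo --> 0.

Definition asymptotically_shadowed_in_average (xs : nat -> X) (z : X) : Prop :=
  exists sigma : nat -> L,
    cesaro (fun i => mdist (Fsigma sigma i z) (xs i)) @ \oo --> 0.

Definition asymptotic_average_shadowing_property : Prop :=
  forall xs : nat -> X, asymptotic_average_pseudo_orbit xs ->
    exists z : X, asymptotically_shadowed_in_average xs z.

Definition chain_recurrent (x : X) : Prop :=
  forall eps : R, 0 < eps ->
    exists (n : nat) (p : nat -> X) (lam : nat -> L),
      (0 < n)%N /\ p 0%N = x /\ p n = x /\
      (forall i, (i < n)%N -> mdist (f (lam i) (p i)) (p i.+1) <= eps).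

Definition CR : set X := [set x | chain_recurrent x].
End IFS.

(* Main.v *)
Set Warnings "-all".
Require Import Defs.
From HB Require Import structures.
From mathcomp Require Import all_boot all_order all_algebra.
From mathcomp Require Import all_classical all_reals all_analysis.
From mathcomp Require Import zify ring lra.
Import Order.TTheory GRing.Theory Num.Theory.
Local Open Scope classical_set_scope.
Local Open Scope ring_scope.

Set Implicit Arguments. Unset Strict Implicit.
Section Chains.
Variables (R : realType) (X : metricType R) (L : finType) (f : L -> X -> X).

Inductive chn (eps : R) : X -> X -> Prop :=
| chn1 x y l : mdist (f l x) y <= eps -> chn eps x y
| chnS x y w l : mdist (f l x) y <= eps -> chn eps y w -> chn eps x w.

Lemma chn_trans eps x y w : chn eps x y -> chn eps y w -> chn eps x w.
Proof.
elim=> [x1 y1 l H|x1 y1 w1 l H _ IH] Hw; first exact: chnS H Hw.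
exact: chnS H (IH Hw).
Qed.

Lemma chn_cr eps x y : chn eps x y ->
  exists (n : nat) (p : nat -> X) (lam : nat -> L),
      (0 < n)%N /\ p 0%N = x /\ p n = y /\
      (forall i, (i < n)%N -> mdist (f (lam i) (p i)) (p i.+1) <= eps).
Proof.
elim=> [x1 y1 l H|x1 y1 w1 l H _ [n [p [lam [n0 [p0 [pn Hs]]]]]]].
  exists 1%N, (fun i => if i is 0%N then x1 else y1), (fun _ => l).
  by split=> //; split=> //; split=> // -[|i].
exists n.+1, (fun i => if i is k.+1 then p k else x1),
  (fun i => if i is k.+1 then lam k else l).
split=> //; split=> //; split=> // -[|i] /=; first by rewrite p0.
exact: Hs.
Qed.

Lemma chn_iter eps l : 0 <= eps -> forall t u y,
  mdist (iter t.+1 (f l) u) y <= eps -> chn eps u y.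
Proof.
move=> e0; elim=> [|t IH] u y H; first exact: chn1 H.
apply: (@chnS eps u (f l u) y l); first by rewrite mdistxx.
by apply: IH; rewrite -iterSr.
Qed.

Lemma chn_Fs eps sig z y : 0 <= eps -> forall m i,
  mdist (Fsigma f sig (i + m).+1 z) y <= eps -> chn eps (Fsigma f sig i z) y.
Proof.
move=> e0; elim=> [|m IH] i H.
  by apply: (@chn1 eps _ y (sig i)); rewrite addn0 in H.
apply: (@chnS eps _ (Fsigma f sig i.+1 z) y (sig i)); first by rewrite mdistxx.
by apply: IH; rewrite addSnnS.
Qed.

End Chains.
Lemma compact_bnd (R : realType) (X : metricType R) (x0 : X) : compact [set: X] ->
  exists D : R, 0 <= D /\ forall y y' : X, mdist y y' <= D.
Proof.
move=> /compact_near_coveringP /(_ nat \oo (fun n y => mdist x0 y < n%:R)).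
case.
- move=> x _.
  exists (ball x 1, [set n : nat | mdist x0 x + 1 < n%:R]); first split => /=.
  + exact: nbhsx_ballx.
  + exists (Num.Def.archi_bound (mdist x0 x + 1)) => // n /= hn.
    apply: lt_le_trans (archi_boundP _) _; first by apply: addr_ge0 => //; apply: mdist_ge0.
    by rewrite ler_nat.
  + case=> y n /= [hy hn]; rewrite ballEmdist /= in hy.
    apply: le_lt_trans (metric_triangle _ x _) _; lra.
move=> N _ HN.
exists (N%:R + N%:R); split; first by apply: addr_ge0.
move=> y y'.
have h1 := HN N (leqnn N) y I.
have h2 := HN N (leqnn N) y' I.
apply: le_trans (metric_triangle _ x0 _) _; rewrite metric_sym; lra.
Qed.

Lemma dense_good (R : realType) (u : nat -> R) (eps : R) : 0 < eps ->
  (forall i, 0 <= u i) -> Defs.cesaro u @ \oo --> 0 ->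
  exists N, forall lo hi : nat, (N <= hi)%N -> (hi <= 8 * (hi - lo))%N ->
   (lo < hi)%N -> exists i, (lo <= i < hi)%N /\ u i < eps.
Proof.
move=> e0 u0 /cvgrPdist_lt /(_ (eps / 8)) [].
  by rewrite divr_gt0.
move=> N _ HN; exists N => lo hi Nhi Hfr lohi.
apply: contrapT => Hno.
have Hb : forall i, (lo <= i < hi)%N -> eps <= u i.
  move=> i Hi; rewrite leNgt; apply/negP => Hlt; apply: Hno; by exists i.
have := HN hi Nhi; rewrite /Defs.cesaro sub0r normrN.
have hi0 : (0 < hi%:R :> R) by rewrite ltr0n; lia.
have S0 : 0 <= \sum_(i < hi) u i by apply: sumr_ge0.
rewrite ger0_norm; last by rewrite mulr_ge0 // invr_ge0 ltW.
apply/negP; rewrite -leNgt ler_pdivlMl //.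
have H1 : eps *+ (hi - lo) <= \sum_(i < hi) u i.
  rewrite -sumr_const_nat -(big_mkord xpredT u) (@big_cat_nat _ _ _ lo 0%N hi) //=;
    last by lia.
  rewrite -[X in X <= _]add0r; apply: lerD; [by apply: sumr_ge0|].
  by apply: ler_sum_nat => i Hi; apply: Hb.
apply: le_trans H1; rewrite -mulr_natr.
have H2 : (hi%:R : R) <= 8 * (hi - lo)%:R by rewrite -natrM ler_nat.
have := ler_wpM2l (ltW e0) H2.
move: (eps * (hi - lo)%:R) => t; lra.
Qed.

Lemma tl_bound (M m : nat) : (0 < m)%N -> (2 ^ M * (trunc_log 2 m - M) <= m)%N.
Proof.
move=> m0; have ht := trunc_logP (isT : (1 < 2)%N) m0.
move: ht; set t := trunc_log 2 m => ht.
case: (leqP t M) => h; first by move: h; rewrite -subn_eq0 => /eqP ->; rewrite muln0.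
have h2 := ltn_expl (t - M) (isT : (1 < 2)%N).
apply: leq_trans ht.
have -> : (2 ^ t = 2 ^ M * 2 ^ (t - M))%N by rewrite -expnD subnKC // ltnW.
by rewrite leq_mul2l ltnW // orbT.
Qed.

Lemma cesaro_jumps (R: realType) (e : nat -> R) (D : R) : 0 <= D ->
  (forall i, 0 <= e i) ->
  (forall i, e i <= D * ((trunc_log 2 i.+2)%:R - (trunc_log 2 i.+1)%:R)) ->
  Defs.cesaro e @ \oo --> 0.
Proof.
move=> D0 e0 he.
have HS : forall n, \sum_(i < n) e i <= D * (trunc_log 2 n.+1)%:R.
  elim=> [|n IH]; first by rewrite big_ord0 trunc_log1 mulr0.
  by rewrite big_ord_recr /=; move: (he n); rewrite mulrBr; lra.
apply/cvgrPdist_lt => eps epos.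
set M := Num.Def.archi_bound (4 * D / eps).
have HP : 4 * D / eps < 2 ^+ M by apply: upper_nthrootP.
set N := Num.Def.archi_bound (2 * D * M%:R / eps).
have HN : 2 * D * M%:R / eps < N%:R.
  by apply: archi_boundP; rewrite divr_ge0 // ?mulr_ge0 // ltW.
exists N.+1 => // n /= hn.
have n0 : (0 < n%:R :> R) by rewrite ltr0n; lia.
have Nn : (N%:R <= n%:R :> R) by rewrite ler_nat; lia.
rewrite sub0r normrN /Defs.cesaro ger0_norm; last first.
  by apply: mulr_ge0; [rewrite invr_ge0 ltW | apply: sumr_ge0].
have hb := @tl_bound M n.+1 (ltn0Sn n).
set t := trunc_log 2 n.+1 in hb HS *.
have hb2 : (2 ^ M * t <= 2 ^ M * M + n.+1)%N.
  apply: leq_trans (leq_add (leqnn _) hb); rewrite -mulnDr leq_mul2l.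
  by apply/orP; right; lia.
have hbR : 2 ^+ M * t%:R <= 2 ^+ M * M%:R + n%:R + 1 :> R.
  by rewrite -(ler_nat R) in hb2; move: hb2; rewrite !natrD !natrM natrX -natr1; lra.
set P := (2 ^+ M : R) in HP hbR *.
have P0 : 0 < P by rewrite exprn_gt0.
have H1 : 4 * D < eps * P by rewrite -ltr_pdivrMl // mulrC.
have H2 : 2 * D * M%:R < eps * n%:R.
  by rewrite -ltr_pdivrMl // mulrC; apply: lt_le_trans Nn.
rewrite ltr_pdivrMl //.
apply: le_lt_trans (HS n) _.
have H3 : D * (P * t%:R) <= D * (P * M%:R + n%:R + 1) by apply: ler_wpM2l.
have H4 : (2 * D * M%:R) * P < (eps * n%:R) * P by rewrite ltr_pM2r.
have H5 : (4 * D) * n%:R < (eps * P) * n%:R by rewrite ltr_pM2r.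
have H6 : D * (n%:R + 1) <= D * (2 * n%:R).
  have n1 : (1 <= n%:R :> R) by rewrite ler1n; lia.
  by apply: ler_wpM2l => //; lra.
have H7 : (D * t%:R) * P < (n%:R * eps) * P.
  move: H3 H4 H5 H6; rewrite !mulrDr; nra.
by move: H7; rewrite ltr_pM2r.
Qed.

Theorem mainTheorem5 (R : realType) (X : metricType R) (L : finType)
  (f : L -> X -> X) :
  compact [set: X] ->
  (0 < #|L|)%N ->
  (forall l, continuous (f l)) ->
  (forall l (y : X), exists x : X, f l x = y) ->
  asymptotic_average_shadowing_property f ->
  CR f = [set: X].
Proof.
move=> cX cardL _ fsurj aasp.
apply/seteqP; split => // x _ eps epos.
case/card_gt0P: cardL => l0 _.
have gex : forall y, {w : X | f l0 w = y} := fun y => cid (fsurj l0 y).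
pose g y := projT1 (gex y).
have gK : forall y, f l0 (g y) = y := fun y => projT2 (gex y).
have iterg : forall h, iter h (f l0) (iter h g x) = x.
  by elim=> // h IH; rewrite [iter h.+1 g x]iterS iterSr gK.
pose xs i := iter (i.+1 - 2 ^ trunc_log 2 i.+1) (f l0)
   (iter (2 ^ (trunc_log 2 i.+1).-1) g x).
have [D [D0 HD]] := @compact_bnd R X x cX.
have pso : asymptotic_average_pseudo_orbit f xs.
  exists (fun _ => l0); apply: (@cesaro_jumps R _ D D0).
    by move=> i; apply: mdist_ge0.
  move=> i.
  have mono : (trunc_log 2 i.+1 <= trunc_log 2 i.+2)%N by apply: leq_trunc_log.
  have [E|NE] := eqVneq (trunc_log 2 i.+2) (trunc_log 2 i.+1).
    rewrite E subrr mulr0 /xs E.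
    have hle := trunc_logP (isT : (1 < 2)%N) (ltn0Sn i).
    by rewrite (subSn hle) iterS mdistxx.
  have H1 : (1 <= (trunc_log 2 i.+2)%:R - (trunc_log 2 i.+1)%:R :> R).
    rewrite -natrB // ler1n; lia.
  apply: le_trans (HD _ _) _.
  rewrite -[X in X <= _]mulr1; apply: ler_wpM2l => //.
have [z [sig' Hz]] := aasp xs pso.
have [N HN] := @dense_good R _ eps epos (fun i => mdist_ge0 _ _) Hz.
pose P := (2 ^ N)%N.
have hP : (N < P)%N by apply: ltn_expl.
have e2 : (2 ^ N.+2 = 4 * P)%N by rewrite !expnS mulnA.
have e1 : (2 ^ N.+1 = 2 * P)%N by rewrite !expnS.
have e3 : (2 ^ N.+3 = 8 * P)%N by rewrite !expnS !mulnA.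
have e4 : (2 ^ N.+4 = 16 * P)%N by rewrite !expnS !mulnA.
have [i [Hi ui]] : exists i, (6 * P <= i < 8 * P - 1)%N /\
    mdist (Fsigma f sig' i z) (xs i) < eps.
  by apply: HN; lia.
have [j [Hj uj]] : exists j, (8 * P - 1 <= j < 12 * P - 1)%N /\
    mdist (Fsigma f sig' j z) (xs j) < eps.
  by apply: HN; lia.
have ki : trunc_log 2 i.+1 = N.+2.
  by apply: trunc_log_eq => //; rewrite e2 e3; lia.
have kj : trunc_log 2 j.+1 = N.+3.
  by apply: trunc_log_eq => //; rewrite e3 e4; lia.
have xsi : xs i = iter (i - 6 * P).+1 (f l0) x.
  rewrite /xs ki /= e2 e1.
  have -> : (i.+1 - 4 * P = (i - 6 * P).+1 + 2 * P)%N by lia.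
  by rewrite iterD -e1 iterg.
have e0 : 0 <= eps by apply: ltW.
have cA : chn f eps x (Fsigma f sig' i z).
  apply: (chn_iter e0 (l := l0) (t := (i - 6 * P)%N)).
  by rewrite -xsi metric_sym ltW.
have cM : chn f eps (Fsigma f sig' i z) (xs j).
  apply: (chn_Fs e0 (m := (j - i - 1)%N)).
  have -> : ((i + (j - i - 1)).+1 = j)%N by lia.
  exact: ltW.
have cB : chn f eps (xs j) x.
  apply: (chn_iter e0 (l := l0) (t := (4 * P - (j.+1 - 8 * P) - 1)%N)).
  rewrite /xs kj /= e3 e2 -iterD -iterS.
  have -> : ((4 * P - (j.+1 - 8 * P) - 1 + (j.+1 - 8 * P)).+1 = 4 * P)%N by lia.
  by rewrite -e2 iterg mdistxx.
have [n [p [lam [n0 [p0 [pn Hs]]]]]] := chn_cr (chn_trans cA (chn_trans cM cB)).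
by exists n, p, lam.
Qed.
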